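(* Let $G$ be a finite group acting (via a homomorphism $\Gamma_G: G \to S_A$) on a finite set $A = X \sqcup Y$ of cardinality $n$, and suppose the action is partition-preserving. Let $\Omega = \Omega_X \sqcup \Omega_Y$ be a set of colors, with weight functions $\omega_X:\Omega_X\to\mathbb{N}^+$ and $\omega_Y:\Omega_Y\to\mathbb{N}^+$ having only finitely many colors of each weight, and let $f_X$, $f_Y$ be their generating functions. Let $\Phi$ be the set of valid colorings of $A$. Then the action of $G$ on $A$ induces an action on $\Phi$ given by $(g\varphi)(a) = \varphi(ga)$, and, as formal power series, $$\sum_{w\ge 0} \#\{\text{orbits of } G \text{ on } \Phi \text{ consisting of colorings of total weight } w\}\, x^w \;=\; \tilde Z_G\big(f_X(x), f_X(x^2),\ldots, f_X(x^n), f_Y(x), f_Y(x^2),\ldots, f_Y(x^n)\big).$$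
   Context: For a finite set $A$, $S_A$ is the group of bijections $A\to A$; every element of $S_A$ decomposes uniquely (up to order) into pairwise disjoint cycles. An action $\Gamma_G$ of $G$ on $A = X\sqcup Y$ is partition-preserving if for all $g\in G$ and $a\in A$: $ga\in X \iff a\in X$ and $ga\in Y\iff a\in Y$; equivalently every cycle of every $\Gamma_G(g)$ lies entirely in $X$ or entirely in $Y$. For $g\in G$, $C_k^X(g)$ (resp. $C_k^Y(g)$) denotes the number of $k$-cycles in the disjoint cycle decomposition of $\Gamma_G(g)$ contained in $X$ (resp. $Y$), where fixed points count as 1-cycles. The bipartite cycle index is the polynomial $$\tilde Z_G(x_1,\ldots,x_n,y_1,\ldots,y_n) = \frac{1}{|G|}\sum_{g\in G} x_1^{C_1^X(g)}\cdots x_n^{C_n^X(g)}\, y_1^{C_1^Y(g)}\cdots y_n^{C_n^Y(g)}.$$ For a weight function $\omega:\Omega'\to\mathbb{N}$ with $|\omega^{-1}(i)|$ finite for all $i$, its generating function is $f_\omega(x)=\sum_{i\ge 0}|\omega^{-1}(i)|\,x^i$. A coloring $\varphi: A\to\Omega_X\sqcup\Omega_Y$ is valid if $\varphi(a)\in\Omega_X\iff a\in X$ and $\varphi(a)\in\Omega_Y\iff a\in Y$. The total weight of a valid coloring $\varphi$ is $\sum_{a\in X}\omega_X(\varphi(a)) + \sum_{a\in Y}\omega_Y(\varphi(a))$. *)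

(* Defs.v *)
From HB Require Import structures.
From mathcomp Require Import all_boot all_order all_algebra all_fingroup.
Set Implicit Arguments. Unset Strict Implicit. Unset Printing Implicit Defensive.
Import GRing.Theory Num.Theory.
Local Open Scope ring_scope.

Definition ps := nat -> rat.
Definition psone : ps := fun n => (n == 0%N)%:R.
Definition psmul (f g : ps) : ps :=
  fun n => \sum_(i < n.+1) f i * g (n - i)%N.
Definition psexp (f : ps) (k : nat) : ps := iter k (psmul f) psone.
Definition psprod (s : seq ps) : ps := foldr psmul psone s.
(* f(x^k) for k >= 1 *)
Definition pssubst_pow (f : ps) (k : nat) : ps :=
  fun n => if (k %| n)%N then f (n %/ k)%N else 0.

Definition ncycles_in (A : finType) (s : {perm A}) (B : {set A}) (k : nat) : nat :=
  #|[set c in porbits s | (#|c| == k) && (c \subset B)]|.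

(* Bipartite cycle index evaluated at
   x_k := fX(x^k), y_k := fY(x^k), k = 1..#|A|, as a formal power series. *)
Definition bip_cycle_index_subst (gT : finGroupType) (G : {group gT}) (A : finType)
  (Gamma : gT -> {perm A}) (X Y : {set A}) (fX fY : ps) : ps :=
  fun w => (#|G|%:R)^-1 * \sum_(g in G)
     psprod ([seq psexp (pssubst_pow fX k) (ncycles_in (Gamma g) X k)
               | k <- iota 1 #|A|] ++
             [seq psexp (pssubst_pow fY k) (ncycles_in (Gamma g) Y k)
               | k <- iota 1 #|A|]) w.

(* f is the generating function of the weight function om:
   f i = |om^{-1}(i)| (each fiber finite). *)
Definition is_genfun (O : Type) (om : O -> nat) (f : nat -> nat) : Prop :=
  forall i, exists e : 'I_(f i) -> O,
    injective e /\ forall c, om c = i <-> exists j, e j = c.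

Definition coloring (A : Type) (OX OY : Type) := A -> OX + OY.

Definition is_inl (OX OY : Type) (c : OX + OY) : bool :=
  if c is inl _ then true else false.

Definition valid_coloring (A : finType) (OX OY : Type) (X Y : {set A})
  (phi : coloring A OX OY) : Prop :=
  forall a, ((a \in X) = is_inl (phi a)) /\ ((a \in Y) = ~~ is_inl (phi a)).

Definition color_weight (OX OY : Type) (omX : OX -> nat) (omY : OY -> nat)
  (c : OX + OY) : nat :=
  match c with inl x => omX x | inr y => omY y end.

Definition total_weight (A : finType) (OX OY : Type) (omX : OX -> nat)
  (omY : OY -> nat) (phi : coloring A OX OY) : nat :=
  (\sum_(a : A) color_weight omX omY (phi a))%N.

Definition act_coloring (A : finType) (OX OY : Type) (s : {perm A})
  (phi : coloring A OX OY) : coloring A OX OY := fun a => phi (s a).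

Definition same_orbit (gT : finGroupType) (G : {group gT}) (A : finType)
  (OX OY : Type) (Gamma : gT -> {perm A}) (phi psi : coloring A OX OY) : Prop :=
  exists2 g, g \in G & psi = act_coloring (Gamma g) phi.

(* The set {phi | P phi} is the union of exactly n orbits of the relation R
   (R an orbit relation): there are n pairwise non-related representatives
   in P, and every element of P is related to one of them. *)
Definition num_orbits (T : Type) (P : T -> Prop) (R : T -> T -> Prop) (n : nat)
  : Prop :=
  exists r : 'I_n -> T,
    (forall i, P (r i)) /\
    (forall i j, R (r i) (r j) -> i = j) /\
    (forall t, P t -> exists i, R (r i) t).

(* Main.v *)
Require Import Defs.
From HB Require Import structures.
From mathcomp Require Import all_boot all_order all_algebra all_fingroup.
From Stdlib Require Import FunctionalExtensionality.
Import GRing.Theory Num.Theory.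
Local Open Scope ring_scope.
Set Implicit Arguments. Unset Strict Implicit. Unset Printing Implicit Defensive.

Section Trunc.
Variable w : nat.
Definition Tr (f : ps) : {poly rat} := \poly_(i < w.+1) f i.
Definition eqw (p q : {poly rat}) := forall n, (n <= w)%N -> p`_n = q`_n.

Lemma eqw_refl p : eqw p p. Proof. by []. Qed.
Lemma eqw_sym p q : eqw p q -> eqw q p. Proof. by move=> h n hn; rewrite h. Qed.
Lemma eqw_trans p q r : eqw p q -> eqw q r -> eqw p r.
Proof. by move=> h1 h2 n hn; rewrite h1 // h2. Qed.
Lemma eqw_mul p p' q q' : eqw p p' -> eqw q q' -> eqw (p * q) (p' * q').
Proof.
move=> h1 h2 n hn; rewrite !coefM; apply: eq_bigr => j _.
have hj : (j <= w)%N by apply: leq_trans hn; rewrite -ltnS.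
rewrite h1 // h2 //; apply: leq_trans hn; exact: leq_subr.
Qed.
Lemma coefTr f n : (n <= w)%N -> (Tr f)`_n = f n.
Proof. by move=> hn; rewrite coef_poly ltnS hn. Qed.
Lemma Tr_mul f g : eqw (Tr (psmul f g)) (Tr f * Tr g).
Proof.
move=> n hn; rewrite coefTr // coefM /psmul; apply: eq_bigr => j _.
have hj : (j <= w)%N by apply: leq_trans hn; rewrite -ltnS.
rewrite !coefTr //; apply: leq_trans hn; exact: leq_subr.
Qed.
Lemma Tr_one : eqw (Tr psone) 1.
Proof. by move=> n hn; rewrite coefTr // coef1 /psone. Qed.
Lemma Tr_exp f p m : eqw (Tr f) p -> eqw (Tr (psexp f m)) (p ^+ m).
Proof.
move=> hf; elim: m => [|m IH]; first by rewrite expr0; exact: Tr_one.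
rewrite /psexp iterS -/(psexp f m) exprS.
exact: eqw_trans (Tr_mul _ _) (eqw_mul hf IH).
Qed.
Lemma Tr_prod (I : Type) (l : seq I) (F : I -> ps) (P : I -> {poly rat}) :
  (forall i, eqw (Tr (F i)) (P i)) ->
  eqw (Tr (psprod (map F l))) (\prod_(i <- l) P i).
Proof.
move=> hF; elim: l => [|i l IH]; first by rewrite big_nil; exact: Tr_one.
rewrite big_cons /=.
exact: eqw_trans (Tr_mul _ _) (eqw_mul (hF i) IH).
Qed.
Lemma Tr_prod_pos (l : seq nat) (F : nat -> ps) (P : nat -> {poly rat}) :
  (forall i, i \in l -> (0 < i)%N) ->
  (forall i, (0 < i)%N -> eqw (Tr (F i)) (P i)) ->
  eqw (Tr (psprod (map F l))) (\prod_(i <- l) P i).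
Proof.
move=> hl hF; elim: l hl => [|i l IH] hl; first by rewrite big_nil; exact: Tr_one.
rewrite big_cons /=.
apply: eqw_trans (Tr_mul _ _) (eqw_mul (hF i (hl i (mem_head _ _))) (IH _)).
by move=> j hj; apply: hl; rewrite inE hj orbT.
Qed.
Lemma Tr_cat l1 l2 : eqw (Tr (psprod (l1 ++ l2))) (Tr (psprod l1) * Tr (psprod l2)).
Proof.
elim: l1 => [|f l1 IH] /=.
  apply: eqw_sym; apply: eqw_trans (eqw_mul Tr_one (eqw_refl _)) _.
  by rewrite mul1r; exact: eqw_refl.
apply: eqw_trans (Tr_mul _ _) _.
apply: eqw_trans (eqw_mul (eqw_refl _) IH) _.
rewrite mulrA; apply: eqw_mul (eqw_refl _).
exact: eqw_sym (Tr_mul _ _).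
Qed.
Lemma eqw_prod (I : Type) (l : seq I) (F G : I -> {poly rat}) :
  (forall i, eqw (F i) (G i)) -> eqw (\prod_(i <- l) F i) (\prod_(i <- l) G i).
Proof.
move=> hF; elim: l => [|i l IH]; first by rewrite !big_nil.
rewrite !big_cons; exact: eqw_mul.
Qed.
Lemma eqw_exp p q m : eqw p q -> eqw (p ^+ m) (q ^+ m).
Proof.
move=> h; elim: m => [|m IH]; first by rewrite !expr0.
rewrite !exprS; exact: eqw_mul.
Qed.

Variable f : nat -> nat.
Definition Qc (k : nat) : {poly rat} :=
  \sum_(x : {i : 'I_w.+1 & 'I_(f i)}) 'X^(k * tag x).

Lemma Qc_eqw k : (0 < k)%N ->
  eqw (Tr (pssubst_pow (fun i => (f i)%:R) k)) (Qc k).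
Proof.
move=> k0 n hn; rewrite coefTr // /Qc coef_sum.
rewrite -(@sig_big_dep _ _ _ _ (fun i : 'I_w.+1 => 'I_(f i)) xpredT (fun _ _ => true)
   (fun i _ => ('X^(k * i))`_n)) /=.
under eq_bigr => i _ do rewrite sumr_const card_ord coefXn.
rewrite /pssubst_pow; case: ifP => [/dvdnP [q def_n]|nd].
  have hq : (q < w.+1)%N.
    rewrite ltnS; apply: leq_trans hn; rewrite def_n; exact: leq_pmulr.
  rewrite def_n.
  rewrite (bigD1 (Ordinal hq)) //= big1 ?addr0.
    by rewrite mulnC eqxx mulKn // mulr1n.
  move=> i /eqP hi; rewrite mulnC eqn_pmul2l //.
  case: eqP => [e|_]; last by rewrite mul0rn.
  by case: hi; apply: val_inj; rewrite /= e.
rewrite big1 // => i _; case: eqP => [e|_]; last by rewrite mul0rn.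
by move: nd; rewrite e dvdn_mulr.
Qed.
End Trunc.

Section FixGen.
Variables (A : finType) (X : {set A}) (C : finType) (isl : C -> bool)
  (wt : C -> nat) (s : {perm A}).
Hypothesis hs : forall a, (s a \in X) = (a \in X).

Definition validF (F : {ffun A -> C}) := [forall a, (a \in X) == isl (F a)].
Definition fixF (F : {ffun A -> C}) := [forall a, F (s a) == F a].
Definition wtF (F : {ffun A -> C}) := (\sum_a wt (F a))%N.
Definition okc (c : {set A}) (j : C) := (c \subset X) == isl j.

Lemma iter_s i a : (s ^+ i.+1)%g a = s ((s ^+ i)%g a).
Proof. by rewrite expgSr permM. Qed.

Lemma fix_orbit F a b : fixF F -> b \in porbit s a -> F b = F a.
Proof.
move=> /forallP hF /porbitP [i ->]; elim: i => [|i IH]; first by rewrite expg0 perm1.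
by rewrite iter_s (eqP (hF _)).
Qed.

Lemma porbit_sub a : (porbit s a \subset X) = (a \in X).
Proof.
apply/idP/idP => [/subsetP hX|ha]; first exact: hX _ (porbit_id s a).
apply/subsetP => b /porbitP [i ->]; elim: i => [|i IH]; first by rewrite expg0 perm1.
by rewrite iter_s hs.
Qed.

Lemma wtF_orbit (h : {ffun {set A} -> C}) :
  wtF [ffun a => h (porbit s a)] = (\sum_(c in porbits s) #|c| * wt (h c))%N.
Proof.
rewrite /wtF (partition_big (porbit s) (mem (porbits s))) /=; last first.
  by move=> a _; rewrite /porbits imset_f.
apply: eq_bigr => c /imsetP [b _ ->].
rewrite (eq_bigr (fun _ => wt (h (porbit s b)))); last first.
  by move=> a /eqP <-; rewrite ffunE.
rewrite sum_nat_const; congr (_ * _)%N; apply: eq_card => a.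
by rewrite -eq_porbit_mem.
Qed.

Variable j0 : C.
Definition rep (c : {set A}) (F : {ffun A -> C}) :=
  if [pick a in c] is Some a then F a else j0.
Definition Fof (h : {ffun {set A} -> C}) : {ffun A -> C} :=
  [ffun a => h (porbit s a)].
Definition hof (F : {ffun A -> C}) : {ffun {set A} -> C} :=
  [ffun c => if c \in porbits s then rep c F else j0].

Lemma pick_orbit c : c \in porbits s ->
  exists2 a, [pick a in c] = Some a & porbit s a = c.
Proof.
move=> /imsetP [b _ ->]; case: pickP => [a ha|]; last first.
  by move=> /(_ b); rewrite porbit_id.
by exists a => //; apply/eqP; rewrite eq_porbit_mem.
Qed.

Lemma fix_gen :
  \sum_(F | validF F && fixF F) 'X^(wtF F) =
  \prod_(c in porbits s) \sum_(j | okc c j) 'X^(#|c| * wt j) :> {poly rat}.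
Proof.
rewrite (big_distr_big_dep j0) /=.
rewrite (reindex_onto Fof hof); last first.
  move=> F /andP [_ hF]; apply/ffunP => a; rewrite !ffunE.
  have hc : porbit s a \in porbits s by rewrite /porbits imset_f.
  have [b hb hba] := pick_orbit hc.
  rewrite hc /rep hb.
  apply: fix_orbit hF _; rewrite -hba; exact: porbit_id.
apply: eq_big => h.
  apply/idP/idP.
    move=> /andP [/andP [/forallP hv _] /eqP hh]; apply/familyP => c /=.
    rewrite -hh ffunE; case: ifP => hc.
      have [a ha hac] := pick_orbit hc.
      rewrite /rep ha inE /okc -hac porbit_sub.
      by have := hv a; rewrite ffunE.
    by rewrite inE.
  move=> /familyP hf; apply/andP; split; first (apply/andP; split).
  - apply/forallP => a; rewrite ffunE.
    have hc : porbit s a \in porbits s by rewrite /porbits imset_f.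
    by have := hf (porbit s a); rewrite /= hc inE /okc porbit_sub.
  - apply/forallP => a; rewrite !ffunE.
    by have := porbit_perm s 1 a; rewrite expg1 => ->.
  apply/eqP/ffunP => c; rewrite !ffunE; case: ifP => hc.
    have [a ha hac] := pick_orbit hc.
    by rewrite /rep ha ffunE hac.
  by have := hf c; rewrite /= hc inE => /eqP ->.
move=> _; rewrite prodrXr; congr ('X^ _).
rewrite /Fof wtF_orbit; apply: eq_bigr => c _; by [].
Qed.

Lemma group_len (p : pred {set A}) (G : nat -> {poly rat}) :
  (forall c, p c -> c \in porbits s) ->
  \prod_(c | p c) G #|c| =
  \prod_(k <- iota 1 #|A|) G k ^+ #|[set c | p c && (#|c| == k)]|.
Proof.
move=> hp.
transitivity (\prod_(k <- iota 1 #|A|) \prod_(c in [set c | p c && (#|c| == k)]) G #|c|); last first.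
  apply: eq_bigr => k _; rewrite -prodr_const; apply: eq_bigr => c.
  by rewrite inE => /andP [_ /eqP ->].
rewrite [RHS](exchange_big_dep p) /=; last by move=> k c _; rewrite inE => /andP [].
apply: eq_bigr => c hc.
have -> : iota 1 #|A| = index_iota 1 #|A|.+1 by rewrite /index_iota subn1.
rewrite (eq_bigl (fun k => k == #|c|)); last by move=> k; rewrite inE hc eq_sym.
rewrite big_nat1_eq ifT //.
have /imsetP [b _ ->] := hp c hc.
by rewrite lt0n card_porbit_neq0 ltnS max_card.
Qed.

Variable Y : {set A}.
Hypotheses (hXY : X :&: Y = set0) (hXY' : X :|: Y = [set: A]).
Lemma inY a : (a \in Y) = (a \notin X).
Proof.
have /setP/(_ a) := hXY; have /setP/(_ a) := hXY'; rewrite !inE.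
by case: (a \in X); case: (a \in Y).
Qed.
Lemma porbit_subY a : (porbit s a \subset Y) = (a \in Y).
Proof.
apply/idP/idP => [/subsetP hX|ha]; first exact: hX _ (porbit_id s a).
apply/subsetP => b /porbitP [i ->]; elim: i => [|i IH]; first by rewrite expg0 perm1.
by rewrite iter_s inY hs -inY.
Qed.

Lemma regroup :
  \prod_(c in porbits s) \sum_(j | okc c j) 'X^(#|c| * wt j) =
  \prod_(k <- iota 1 #|A|) (\sum_(j | isl j) 'X^(k * wt j)) ^+ ncycles_in s X k *
  \prod_(k <- iota 1 #|A|) (\sum_(j | ~~ isl j) 'X^(k * wt j)) ^+ ncycles_in s Y k
  :> {poly rat}.
Proof.
rewrite (bigID (fun c : {set A} => c \subset X)) /=.
pose GX k : {poly rat} := \sum_(j | isl j) 'X^(k * wt j).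
pose GY k : {poly rat} := \sum_(j | ~~ isl j) 'X^(k * wt j).
congr (_ * _).
  rewrite (eq_bigr (fun c : {set A} => GX #|c|)); last first.
    by move=> c /andP [_ hc]; apply: eq_bigl => j; rewrite /okc hc.
  rewrite group_len; last by move=> c /andP [].
  apply: eq_bigr => k _; congr (_ ^+ _); apply: eq_card => c; rewrite !inE.
  by case: (c \in porbits s); case: (c \subset X); case: (#|c| == k).
rewrite (eq_bigr (fun c : {set A} => GY #|c|)); last first.
  by move=> c /andP [_ hc]; apply: eq_bigl => j; rewrite /okc (negbTE hc); case: (isl j).
rewrite group_len; last by move=> c /andP [].
apply: eq_bigr => k _; congr (_ ^+ _); apply: eq_card => c; rewrite !inE.
case hc: (c \in porbits s) => //=.
have /imsetP [b _ ->] := hc.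
by rewrite porbit_sub porbit_subY inY; case: (b \in X); case: (_ == k).
Qed.
End FixGen.

Lemma fix_gen' (A : finType) (X : {set A}) (C : finType) (isl : C -> bool)
  (wt : C -> nat) (s : {perm A}) (hs : forall a, (s a \in X) = (a \in X)) :
  \sum_(F : {ffun A -> C} | validF X isl F && fixF s F) 'X^(wtF wt F) =
  \prod_(c in porbits s) \sum_(j | okc X isl c j) 'X^(#|c| * wt j) :> {poly rat}.
Proof.
case: (pickP (@predT C)) => [j0 _|C0]; first exact: fix_gen.
case: (pickP (@predT A)) => [a _|A0].
  rewrite big1; last by move=> F _; have := C0 (F a).
  rewrite (bigD1 (porbit s a)) /=; last by rewrite /porbits imset_f.
  by rewrite big1 ?mul0r // => j; have := C0 j.
rewrite [RHS]big_pred0; last first.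
  by move=> c; apply/imsetP => -[b]; have := A0 b.
transitivity (\sum_(F : {ffun A -> C}) (1 : {poly rat})).
  apply: eq_big => F.
    apply/andP; split; apply/forallP => b; have := A0 b; done.
  move=> _; rewrite /wtF big_pred0 ?expr0 // => b; have := A0 b; done.
rewrite sumr_const card_ffun.
by rewrite (eq_card0 (A := A)) ?expn0 // => b; have := A0 b.
Qed.

Unset Implicit Arguments.
Theorem theorem1 (gT : finGroupType) (G : {group gT}) (A : finType)
  (Gamma : {morphism G >-> {perm A}}) (X Y : {set A})
  (hXY : X :&: Y = set0) (hXY' : X :|: Y = [set: A])
  (hpres : forall g a, g \in G ->
     ((Gamma g a \in X) = (a \in X)) /\ ((Gamma g a \in Y) = (a \in Y)))
  (OX OY : Type) (omX : OX -> nat) (omY : OY -> nat)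
  (homX : forall c, (0 < omX c)%N) (homY : forall c, (0 < omY c)%N)
  (fX fY : nat -> nat) (hfX : is_genfun omX fX) (hfY : is_genfun omY fY) :
  (forall g phi, g \in G -> valid_coloring X Y phi ->
     valid_coloring X Y (act_coloring (OX:=OX) (OY:=OY) (Gamma g) phi)) /\
  (forall w : nat,
     exists n : nat,
     num_orbits
       (fun phi : coloring A OX OY =>
          valid_coloring X Y phi /\ total_weight omX omY phi = w)
       (same_orbit G Gamma) n /\
     (n%:R : rat) =
       (bip_cycle_index_subst G Gamma X Y
          (fun i => (fX i)%:R) (fun i => (fY i)%:R) w)).
Proof.
have hvalid : forall phi : coloring A OX OY,
    valid_coloring X Y phi <-> forall a, (a \in X) = is_inl (phi a).
  move=> phi; split => [h a|h a]; first by case: (h a).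
  by rewrite (inY hXY hXY') h.
split.
  move=> g phi hg /hvalid hphi; apply/hvalid => a; rewrite /act_coloring.
  by rewrite -(hpres g a hg).1 hphi.
move=> w.
have [eX heX] : exists eX : forall i : 'I_w.+1, 'I_(fX i) -> OX,
    forall i, injective (eX i) /\ (forall c, omX c = i <-> exists j, eX i j = c).
  by apply: (@fin_all_exists _ (fun i : 'I_w.+1 => 'I_(fX i) -> OX) (fun i e => injective e /\ (forall c, omX c = i <-> exists j, e j = c))) => i; exact: hfX.
have [eY heY] : exists eY : forall i : 'I_w.+1, 'I_(fY i) -> OY,
    forall i, injective (eY i) /\ (forall c, omY c = i <-> exists j, eY i j = c).
  by apply: (@fin_all_exists _ (fun i : 'I_w.+1 => 'I_(fY i) -> OY) (fun i e => injective e /\ (forall c, omY c = i <-> exists j, e j = c))) => i; exact: hfY.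
pose CX := {i : 'I_w.+1 & 'I_(fX i)}.
pose CY := {i : 'I_w.+1 & 'I_(fY i)}.
pose wtC (c : CX + CY) : nat :=
  match c with inl x => nat_of_ord (tag x) | inr y => nat_of_ord (tag y) end.
pose isl (c : CX + CY) : bool := is_inl c.
pose emb (c : CX + CY) : OX + OY :=
  match c with inl x => inl (eX (tag x) (tagged x))
             | inr y => inr (eY (tag y) (tagged y)) end.
have emb_isl c : is_inl (emb c) = isl c by case: c.
have emb_wt c : color_weight omX omY (emb c) = wtC c.
  case: c => [[i j]|[i j]] /=.
    exact: (proj2 ((heX i).2 (eX i j))) (ex_intro _ j erefl).
  exact: (proj2 ((heY i).2 (eY i j))) (ex_intro _ j erefl).
have emb_inj : injective emb.
  case=> [[i j]|[i j]] [[i' j']|[i' j']] //= [] e.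
    have hi : i = i'.
      apply: val_inj => /=.
      rewrite -(proj2 ((heX i).2 (eX i j)) (ex_intro _ j erefl)) e.
      exact: (proj2 ((heX i').2 (eX i' j'))) (ex_intro _ j' erefl).
    subst i'; by rewrite ((heX i).1 _ _ e).
  have hi : i = i'.
    apply: val_inj => /=.
    rewrite -(proj2 ((heY i).2 (eY i j)) (ex_intro _ j erefl)) e.
    exact: (proj2 ((heY i').2 (eY i' j'))) (ex_intro _ j' erefl).
  subst i'; by rewrite ((heY i).1 _ _ e).
pose Emb (F : {ffun A -> CX + CY}) : coloring A OX OY := fun a => emb (F a).
have Emb_valid F : validF X isl F -> valid_coloring X Y (Emb F).
  by move=> /forallP hF; apply/hvalid => a; rewrite /Emb emb_isl; exact/eqP/hF.
have Emb_wt F : total_weight omX omY (Emb F) = wtF wtC F.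
  by apply: eq_bigr => a _; rewrite emb_wt.
pose to (F : {ffun A -> CX + CY}) (g : gT) : {ffun A -> CX + CY} :=
  [ffun a => F ((Gamma g)^-1%g a)].
have isact : is_action G to.
  split.
    move=> g F1 F2 e; apply/ffunP => a.
    have := congr1 (fun F : {ffun A -> CX + CY} => F (Gamma g a)) e.
    by rewrite /to !ffunE permK.
  move=> F g h hg hh; apply/ffunP => a; by rewrite /to !ffunE morphM // invMg permM.
pose toA := Action isact.
pose S := [set F : {ffun A -> CX + CY} | validF X isl F && (wtF wtC F == w)].
have toS : forall g F, g \in G -> F \in S -> to F g \in S.
  move=> g F hg; rewrite !inE => /andP [/forallP hv /eqP hw]; apply/andP; split.
    apply/forallP => a; rewrite ffunE; have := hv ((Gamma g)^-1%g a).
    by rewrite -(hpres g ((Gamma g)^-1%g a) hg).1 permKV.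
  apply/eqP; transitivity (wtF wtC F); last exact: hw.
  rewrite /wtF [RHS](reindex_inj (@perm_inj _ (Gamma g)^-1%g)) /=.
  by apply: eq_bigr => a _; rewrite ffunE.
have actsGS : [acts G, on S | toA].
  apply/subsetP => g hg; rewrite !inE hg /=; apply/subsetP => F hF; rewrite inE.
  exact: toS.
have [trans subOS orbeq cover] := orbit_transversalP actsGS.
set O := orbit_transversal toA G S in trans subOS orbeq cover.
exists #|O|; split.
  exists (fun i => Emb (enum_val i)); split; [|split].
  - move=> i; have := subsetP subOS _ (enum_valP i); rewrite inE => /andP [hv /eqP hw].
    by split; [exact: Emb_valid | rewrite Emb_wt].
  - move=> i j [g hg e].
    have hF : enum_val j = toA (enum_val i) (g^-1)%g.
      apply/ffunP => a; rewrite /= ffunE morphV // invgK; apply: emb_inj.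
      exact: (congr1 (fun f => f a) e).
    apply: enum_val_inj; apply/eqP.
    by rewrite -(orbeq _ _ (enum_valP i) (enum_valP j)) hF mem_orbit // groupV.
  - move=> t [ht hw].
    have [F hF] : exists F : {ffun A -> CX + CY}, forall a, emb (F a) = t a.
      have : forall a, exists c : CX + CY, emb c = t a.
        move=> a; have hle : (color_weight omX omY (t a) <= w)%N.
          by rewrite -hw /total_weight (bigD1 a) //= leq_addr.
        case E: (t a) => [x|y]; rewrite E /= in hle.
          have hx : (omX x < w.+1)%N by rewrite ltnS.
          have [j hj] := proj1 ((heX (Ordinal hx)).2 x) erefl.
          by exists (inl (Tagged (fun i : 'I_w.+1 => 'I_(fX i)) j)); rewrite /= hj.
        have hy : (omY y < w.+1)%N by rewrite ltnS.
        have [j hj] := proj1 ((heY (Ordinal hy)).2 y) erefl.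
        by exists (inr (Tagged (fun i : 'I_w.+1 => 'I_(fY i)) j)); rewrite /= hj.
      move=> /fin_all_exists [f hf]; exists [ffun a => f a] => a; rewrite ffunE.
      exact: hf.
    have FS : F \in S.
      rewrite inE; apply/andP; split.
        apply/forallP => a; have := (proj1 (hvalid t) ht) a.
        by rewrite -hF emb_isl => ->.
      rewrite -Emb_wt; apply/eqP; rewrite -hw; apply: eq_bigr => a _.
      by rewrite /Emb hF.
    have [g hg hgO] := cover F FS.
    exists (enum_rank_in hgO (toA F g)).
    exists g => //; rewrite enum_rankK_in //.
    apply: functional_extensionality => a.
    by rewrite /act_coloring /Emb /= ffunE permK hF.
have FC := Frobenius_Cauchy actsGS.
rewrite (card_transversal trans) /bip_cycle_index_subst.
have G0 : (#|G|%:R : rat) != 0 by rewrite pnatr_eq0 -lt0n cardG_gt0.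
rewrite -(mulKf G0 (#|orbit toA G @: S|%:R)); congr (_ * _).
rewrite -natrM mulnC -FC natr_sum; apply: eq_bigr => g hg.
have hsX a : (Gamma g a \in X) = (a \in X) by exact: (hpres g a hg).1.
have e1 : #|('Fix_(S | toA)[g])%g| =
    #|[set F | (validF X isl F && fixF (Gamma g) F) && (wtF wtC F == w)]|.
  apply: eq_card => F.
  have hfix : (F \in ('Fix_toA[g])%g) = fixF (Gamma g) F.
    apply/afix1P/forallP.
      by move=> e a; rewrite -{1}e /= ffunE permK.
    move=> hf; apply/ffunP => a; rewrite /= ffunE.
    by have := eqP (hf ((Gamma g)^-1%g a)); rewrite permKV => ->.
  rewrite in_setI hfix !inE.
  by case: (validF _ _ _); case: (fixF _ _); case: (_ == w).
rewrite e1.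
have e2 : (#|[set F | (validF X isl F && fixF (Gamma g) F) && (wtF wtC F == w)]|%:R : rat)
   = (\sum_(F | validF X isl F && fixF (Gamma g) F) 'X^(wtF wtC F) : {poly rat})`_w.
  rewrite coef_sum; under eq_bigr do rewrite coefXn.
  rewrite (bigID (fun F => wtF wtC F == w)) /= [X in _ + X]big1 ?addr0; last first.
    by move=> F /andP [_ /negbTE]; rewrite eq_sym => ->.
  rewrite (eq_bigr (fun _ => 1)); last by move=> F /andP [_ /eqP ->]; rewrite eqxx.
  rewrite sumr_const; congr (_ *+ _); apply: eq_card => F; by rewrite inE.
rewrite e2 (fix_gen' _ _ hsX) (regroup _ _ hsX hXY hXY').
set L1 := [seq _ | k <- iota 1 #|A|].
set L2 := [seq _ | k <- iota 1 #|A|].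
have hQ (b : bool) k : \sum_(j : CX + CY | if b then isl j else ~~ isl j) 'X^(k * wtC j)
   = (if b then Qc w fX k else Qc w fY k).
  rewrite big_sumType /= /Qc; case: b => /=.
    by rewrite [X in _ + X]big_pred0 ?addr0.
  by rewrite [X in X + _]big_pred0 ?add0r.
have hl : forall i, i \in iota 1 #|A| -> (0 < i)%N by move=> i; rewrite mem_iota => /andP [].
have E1 := Tr_prod_pos (w := w)
  (F := fun k => psexp (pssubst_pow (fun i => (fX i)%:R) k) (ncycles_in (Gamma g) X k))
  (P := fun k => (\sum_(j : CX + CY | isl j) 'X^(k * wtC j)) ^+ ncycles_in (Gamma g) X k) hl.
have E2 := Tr_prod_pos (w := w)
  (F := fun k => psexp (pssubst_pow (fun i => (fY i)%:R) k) (ncycles_in (Gamma g) Y k))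
  (P := fun k => (\sum_(j : CX + CY | ~~ isl j) 'X^(k * wtC j)) ^+ ncycles_in (Gamma g) Y k) hl.
have H1 : forall k, (0 < k)%N -> eqw w
    (Tr w (psexp (pssubst_pow (fun i => (fX i)%:R) k) (ncycles_in (Gamma g) X k)))
    ((\sum_(j : CX + CY | isl j) 'X^(k * wtC j)) ^+ ncycles_in (Gamma g) X k).
  move=> k k0; apply: Tr_exp; have := hQ true k; rewrite /= => ->; exact: Qc_eqw.
have H2 : forall k, (0 < k)%N -> eqw w
    (Tr w (psexp (pssubst_pow (fun i => (fY i)%:R) k) (ncycles_in (Gamma g) Y k)))
    ((\sum_(j : CX + CY | ~~ isl j) 'X^(k * wtC j)) ^+ ncycles_in (Gamma g) Y k).
  move=> k k0; apply: Tr_exp; have := hQ false k; rewrite /= => ->; exact: Qc_eqw.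
have E := eqw_trans (Tr_cat (w := w) L1 L2) (eqw_mul (E1 H1) (E2 H2)).
by rewrite -(E w (leqnn w)) coefTr.
Qed.
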